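(* Let $\mathcal{R}$ be a right amenable cell space with finite stabiliser $G_0$, let $Q$ be a finite nonempty set, and let $\mathcal{F}=(F_i)_{i\in I}$ be a right Følner net in $\mathcal{R}$. Let $X\subseteq Q^M$ and let $E$ be a finite subset of $G/G_0$ with $G_0\in E$. Then $\mathrm{h}_{(F_i^{+E})_{i\in I}}(X)\leq\mathrm{h}_{\mathcal{F}}(X)$.
   Context: A cell space $\mathcal{R}$ consists of a group $G$ acting transitively on the left on a nonempty set $M$ via $\triangleright$, a point $m_0\in M$ and a family $(g_{m_0,m})_{m\in M}$ in $G$ with $g_{m_0,m}\triangleright m_0=m$. $G_0$ is the stabiliser of $m_0$ and $G/G_0$ the set of left cosets. The right semi-action $\triangleleft\colon M\times G/G_0\to M$ is $m\triangleleft gG_0=g_{m_0,m}g\triangleright m_0$; $m\triangleleft E=\{m\triangleleft e:e\in E\}$. For $A\subseteq M$, $A^{+E}=\{m\in M:(m\triangleleft E)\cap A\neq\emptyset\}$. $\mathcal{R}$ is right amenable if there is a finitely additive probability measure $\mu$ on the power set of $M$ such that $\mu(\{a\triangleleft\mathfrak{g}:a\in A\})=\mu(A)$ whenever $\mathfrak{g}\in G/G_0$, $A\subseteq M$ and $m\mapsto m\triangleleft\mathfrak{g}$ is injective on $A$. A right Følner net in $\mathcal{R}$ is a net $(F_i)_{i\in I}$ (over a directed set) of nonempty finite subsets of $M$ with $\lim_{i}\frac{|F_i\setminus\{m: m\triangleleft\mathfrak{g}\in F_i\}|}{|F_i|}=0$ for every $\mathfrak{g}\in G/G_0$. For $A\subseteq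 M$, $\pi_A\colon Q^M\to Q^A$ is restriction; for a net $\mathcal{F}'=(F'_i)_{i\in I}$ of nonempty finite subsets of $M$, $\mathrm{h}_{\mathcal{F}'}(X)=\limsup_{i\in I}\frac{\log|\pi_{F'_i}(X)|}{|F'_i|}$. *)

(* Defs.v *)
From HB Require Import structures.
From mathcomp Require Import all_boot all_order all_algebra.
From mathcomp Require Import all_classical all_reals.
From mathcomp Require Import ereal exp.
Set Implicit Arguments. Unset Strict Implicit. Unset Printing Implicit Defensive.
Import Order.TTheory GRing.Theory Num.Theory.
Local Open Scope classical_set_scope.
Local Open Scope ring_scope.

(* A cell space: a group G acting transitively on the left on a nonempty set M,
   a base point m0 and a choice of elements g_{m0,m} with g_{m0,m} |> m0 = m. *)
Record cell_space := CellSpace {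
  cG : Type;
  cmul : cG -> cG -> cG;
  cone : cG;
  cinv : cG -> cG;
  cmulA : forall x y z, cmul x (cmul y z) = cmul (cmul x y) z;
  cmul1g : forall x, cmul cone x = x;
  cmulg1 : forall x, cmul x cone = x;
  cmulVg : forall x, cmul (cinv x) x = cone;
  cmulgV : forall x, cmul x (cinv x) = cone;
  cM : Type;
  cact : cG -> cM -> cM;
  cact1 : forall m, cact cone m = m;
  cactM : forall g h m, cact (cmul g h) m = cact g (cact h m);
  ctransitive : forall m m', exists g, cact g m = m';
  cm0 : cM;
  cgsel : cM -> cG;
  cgselP : forall m, cact (cgsel m) cm0 = m
}.

Section CellSpaceDefs.
Variable S : cell_space.
Local Notation G := (cG S).
Local Notation M := (cM S).

Definition stab0 : set G := [set g | cact g (cm0 S) = cm0 S].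

(* Left cosets g G_0 are represented by their elements g : G.
   right semi-action  m <| g G_0 := g_{m0,m} g |> m0  (independent of the
   representative g of the coset). *)
Definition rsemi (m : M) (g : G) : M := cact (cmul (cgsel m) g) (cm0 S).

Definition plus_set (A : set M) (E : set G) : set M :=
  [set m | exists2 e, E e & A (rsemi m e)].

Definition right_amenable (R : realType) : Prop :=
  exists mu : set M -> R,
    [/\ (forall A, 0 <= mu A),
        mu setT = 1,
        (forall A B, A `&` B = set0 -> mu (A `|` B) = mu A + mu B) &
        (forall (g : G) (A : set M),
            {in A &, injective (fun m => rsemi m g)} ->
            mu [set rsemi a g | a in A] = mu A)].
End CellSpaceDefs.

Definition ncard {T} (A : set T) : nat := xget 0%N [set n | (A #= `I_n)%card].

Definition directed (I : Type) (le : I -> I -> Prop) : Prop :=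
  [/\ inhabited I, (forall i, le i i),
      (forall i j k, le i j -> le j k -> le i k) &
      (forall i j, exists k, le i k /\ le j k)].

Definition net_to0 (R : realType) (I : Type) (le : I -> I -> Prop) (a : I -> R) :=
  forall eps : R, 0 < eps -> exists i0, forall i, le i0 i -> `|a i| < eps.

Definition net_limsup (R : realType) (I : Type) (le : I -> I -> Prop) (a : I -> R)
  : \bar R :=
  ereal_inf [set ereal_sup [set (a j)%:E | j in [set j | le i j]] | i in setT].

Definition right_folner_net (S : cell_space) (R : realType) (I : Type)
  (le : I -> I -> Prop) (F : I -> set (cM S)) : Prop :=
  [/\ forall i, finite_set (F i),
      forall i, F i !=set0 &
      forall g : cG S,
        net_to0 le (fun i => (ncard (F i `\` [set m | F i (rsemi m g)]))%:R
                             / (ncard (F i))%:R : R)].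

Definition proj_conf {M Q : Type} (A : set M) (X : set (M -> Q))
  : set ({m : M | A m} -> Q) :=
  [set (fun m => x (proj1_sig m)) | x in X].

Definition net_entropy (R : realType) {M Q : Type} (I : Type) (le : I -> I -> Prop)
  (F : I -> set M) (X : set (M -> Q)) : \bar R :=
  net_limsup le (fun i => ln (ncard (@proj_conf M Q (F i) X))%:R / (ncard (F i))%:R).

Arguments stab0 : clear implicits.
Arguments rsemi : clear implicits.
Arguments plus_set : clear implicits.
Arguments right_amenable : clear implicits.
Arguments right_folner_net : clear implicits.
Arguments net_entropy R {M Q I} le F X.

(* Main.v *)
Require Import Defs.
From HB Require Import structures.
From mathcomp Require Import all_boot all_order all_algebra.
From mathcomp Require Import all_classical all_reals.
From mathcomp Require Import ereal exp.
From mathcomp Require Import zify lra finmap.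
Import Order.TTheory GRing.Theory Num.Theory.
Local Open Scope classical_set_scope.
Local Open Scope ring_scope.
Local Open Scope card_scope.
Set Implicit Arguments. Unset Strict Implicit. Unset Printing Implicit Defensive.

Lemma ncardE T (A : set T) n : A #= `I_n -> ncard A = n.
Proof.
move=> An; rewrite /ncard; apply: xget_unique => // y /= Ay.
apply/card_eq_II; rewrite card_eq_sym in Ay.
exact: card_eq_trans Ay An.
Qed.

Lemma ncard_inf T (A : set T) : ~ finite_set A -> ncard A = 0%N.
Proof. by move=> nA; rewrite /ncard; apply: xgetPN => n An; apply: nA; exists n. Qed.

Lemma ncardP T (A : set T) : finite_set A -> A #= `I_(ncard A).
Proof. by move=> [n An]; rewrite (@ncardE _ A n An). Qed.

Lemma ncard_le T U (A : set T) (B : set U) :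
  A #<= B -> finite_set B -> finite_set A /\ (ncard A <= ncard B)%N.
Proof.
move=> AB fB; have fA := card_le_finite AB fB; split => //.
have := ncardP fA; have := ncardP fB => HB HA.
by rewrite -card_le_II -(card_le_eql HA) -(card_le_eqr HB).
Qed.

Lemma ncard_II n : ncard `I_n = n.
Proof. exact: ncardE. Qed.

Lemma ncard_inj T U (A : set T) (B : set U) (f : T -> U) :
  {in A &, injective f} -> (forall x, A x -> B (f x)) -> finite_set B ->
  finite_set A /\ (ncard A <= ncard B)%N.
Proof.
move=> fi fAB fB; apply: ncard_le fB.
have h := inj_card_eq fi.
apply: (@card_le_trans _ _ _ (f @` A)); first by rewrite (card_le_eqr h).
by apply: subset_card_le => _ [x Ax <-]; apply: fAB.
Qed.

Lemma ncard_sub T (A B : set T) : A `<=` B -> finite_set B ->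
  finite_set A /\ (ncard A <= ncard B)%N.
Proof. by move=> AB; apply: ncard_le; apply: subset_card_le. Qed.

Lemma ncard_fset (T : choiceType) (A : set T) : finite_set A ->
  ncard A = (#|` fset_set A|)%fset.
Proof. by move=> fA; rewrite (card_fset_set (ncardP fA)). Qed.

Lemma ncardU T (A B : set T) : finite_set A -> finite_set B ->
  (ncard (A `|` B) <= ncard A + ncard B)%N.
Proof.
move=> fA fB.
rewrite !(@ncard_fset {classic T}) //; last by rewrite finite_setU.
rewrite (@fset_setU {classic T}) //; exact: leq_card_fsetU.
Qed.

Lemma ncard0 T : ncard (@set0 T) = 0%N.
Proof. by apply: ncardE; rewrite II0. Qed.

Lemma ncard_pos T (A : set T) : finite_set A -> A !=set0 -> (0 < ncard A)%N.
Proof.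
move=> fA [x Ax]; rewrite lt0n; apply/negP => /eqP h.
have := ncardP fA; rewrite h II0 card_eq0 => /eqP A0.
by rewrite A0 in Ax.
Qed.

Lemma ncard_bigU T (A : eqType) (s : seq A) (B : A -> set T) :
  (forall x, finite_set (B x)) ->
  finite_set [set m | exists2 x, x \in s & B x m] /\
  (ncard [set m | exists2 x, x \in s & B x m] <= \sum_(x <- s) ncard (B x))%N.
Proof.
move=> fB; elim: s => [|x s [fs hs]].
  have -> : [set m | exists2 x, x \in [::] & B x m] = set0.
    by apply/seteqP; split => m // [].
  by rewrite ncard0; split => //; exact: finite_set0.
have -> : [set m | exists2 y, y \in x :: s & B y m] =
   B x `|` [set m | exists2 y, y \in s & B y m].
  apply/seteqP; split => m /=.
    by move=> [y]; rewrite inE => /orP[/eqP ->|ys]; [left|right; exists y].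
  by case=> [Bm|[y ys Bm]]; [exists x; rewrite ?inE ?eqxx | exists y; rewrite // inE ys orbT].
split; first by rewrite finite_setU.
rewrite big_cons; apply: leq_trans (ncardU (fB x) fs) _.
by rewrite leq_add2l.
Qed.

Lemma net_to0_add (R : realType) I (le : I -> I -> Prop) (a b : I -> R) :
  directed le -> net_to0 le a -> net_to0 le b -> net_to0 le (fun i => a i + b i).
Proof.
move=> [_ _ tr up] ha hb eps e0.
have e2 : 0 < eps / 2 by rewrite divr_gt0.
have [i1 h1] := ha _ e2; have [i2 h2] := hb _ e2.
have [k [k1 k2]] := up i1 i2.
exists k => i ki; have := h1 i (tr _ _ _ k1 ki); have := h2 i (tr _ _ _ k2 ki).
move=> hbi hai; apply: le_lt_trans (ler_normD _ _) _.
by rewrite (splitr eps) ltrD.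
Qed.

Lemma net_to0_sum (R : realType) I (le : I -> I -> Prop) (A : Type) (s : seq A)
  (a : A -> I -> R) :
  directed le -> (forall x, net_to0 le (a x)) ->
  net_to0 le (fun i => \sum_(x <- s) a x i).
Proof.
move=> dir ha; elim: s => [|x s ih].
  have [[i0] _ _ _] := dir.
  by move=> eps e0; exists i0 => i _; rewrite big_nil normr0.
have := net_to0_add dir (ha x) ih.
by move=> h eps e0; have [i0 hi] := h eps e0; exists i0 => i /hi; rewrite big_cons.
Qed.

Lemma net_to0_scale (R : realType) I (le : I -> I -> Prop) (c : R) (a : I -> R) :
  net_to0 le a -> net_to0 le (fun i => c * a i).
Proof.
move=> ha eps e0.
have c1 : 0 < `|c| + 1 by rewrite ltr_pwDr // normr_ge0.
have [i0 hi] := ha (eps / (`|c| + 1)) (divr_gt0 e0 c1).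
exists i0 => i /hi h; rewrite normrM.
apply: (@le_lt_trans _ _ ((`|c| + 1) * `|a i|)).
  by rewrite ler_wpM2r // lerDl.
by rewrite -ltr_pdivlMl // mulrC.
Qed.

Lemma limsup_le (R : realType) I (le : I -> I -> Prop) (a b c : I -> R) :
  directed le -> (forall i, a i <= b i + c i) -> net_to0 le c ->
  (net_limsup le a <= net_limsup le b)%E.
Proof.
move=> [_ refl tr up] hab hc.
apply: le_ereal_inf_tmp => _ [i _ <-].
apply/lee_addgt0Pr => eps e0.
have [i0 hi0] := hc eps e0.
have [k [k1 k2]] := up i i0.
apply: (@le_trans _ _ (ereal_sup [set (a j)%:E | j in [set j | le k j]])).
  by apply: ereal_inf_lbound; exists k.
apply: ge_ereal_sup => _ [j kj <-].
apply: (@le_trans _ _ ((b j)%:E + eps%:E)%E).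
  rewrite -EFinD lee_fin; apply: (le_trans (hab j)); rewrite lerD2l.
  by apply: ltW; apply: le_lt_trans (ler_norm _) (hi0 j (tr _ _ _ k2 kj)).
rewrite leeD2r //; apply: ereal_sup_ubound; exists j => //.
exact: tr k1 kj.
Qed.

Section Cell.
Variable S : cell_space.
Local Notation G := (cG S).
Local Notation M := (cM S).
Local Notation "x * y" := (cmul x y).
Local Notation m0 := (cm0 S).

Lemma actV (g : G) m : cact (cinv g) (cact g m) = m.
Proof. by rewrite -cactM cmulVg cact1. Qed.

Lemma rsemi_stab m e : stab0 S e -> rsemi S m e = m.
Proof. by rewrite /stab0 /rsemi /= cactM => ->; rewrite cgselP. Qed.

Lemma rsemi_gsel t n : rsemi S t (cgsel n) = cact (cgsel t) n.
Proof. by rewrite /rsemi cactM cgselP. Qed.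

Lemma stabV s g : stab0 S s -> stab0 S g -> stab0 S (s * cinv g).
Proof.
rewrite /stab0 /= => hs hg; rewrite cactM.
by rewrite -{1}hg actV.
Qed.

Lemma rsemi_back m e : exists s, stab0 S s /\
  rsemi S (rsemi S m e) (cgsel (cact (s * cinv e) m0)) = m.
Proof.
set t := rsemi S m e; set h := cgsel m * e.
exists (cinv (cgsel t) * h); split.
  rewrite /stab0 /= cactM. have -> : cact h m0 = t by []. by have := actV (cgsel t) m0; rewrite cgselP.
rewrite rsemi_gsel -!cactM !cmulA cmulgV cmul1g /h -cmulA cmulgV cmulg1.
exact: cgselP.
Qed.

Lemma K_fin (E : set G) : finite_set (stab0 S) ->
  finite_set [set cact e m0 | e in E] ->
  exists s : seq {classic M}, forall s0 e, stab0 S s0 -> E e ->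
    cact (s0 * cinv e) m0 \in s.
Proof.
move=> fS fE.
pose rep (p : M) := @xget {classic G} (cone S) [set e | E e /\ cact e m0 = p].
pose K := [set cact (x.1 * cinv (rep x.2)) m0 | x in stab0 S `*` [set cact e m0 | e in E]].
have fK : finite_set K by apply: finite_image; apply: finite_setX.
have [s hs] : exists s : seq {classic M}, K = [set` s] by apply/(@finite_seqP {classic M} K).
exists s => s0 e hs0 he.
have : K (cact (s0 * cinv e) m0); last by rewrite hs.
set p := cact e m0.
have [Er rp] : E (rep p) /\ cact (rep p) m0 = p.
  by apply: (@xgetPex {classic G} (cone S) [set e | E e /\ cact e m0 = p]); exists e.
set g := cinv (rep p) * e.
have sg : stab0 S g by rewrite /stab0 /= /g cactM -/p -[X in cact _ X = _]rp actV.
exists (s0 * cinv g, p); first by split => //=; [exact: stabV | exists e].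
rewrite /= /g.
congr (cact _ m0).
have -> : cinv (cinv (rep p) * e) = cinv e * rep p.
  rewrite -[RHS]cmulg1 -(cmulgV (cinv (rep p) * e)).
  rewrite !cmulA -[cinv e * rep p * cinv (rep p)]cmulA cmulgV cmulg1 cmulVg cmul1g.
  by [].
by rewrite -!cmulA cmulgV cmulg1.
Qed.
End Cell.

Lemma restr_code (M : Type) (Q : finType) (q0 : Q) (m0 : M) (A B : set M) :
  B `<=` A -> finite_set B ->
  exists psi : ({m | A m} -> Q) -> {ffun 'I_(ncard B) -> Q},
    forall y y', psi y = psi y' ->
      forall m (pm : A m), B m -> y (exist _ m pm) = y' (exist _ m pm).
Proof.
move=> BA fB; have := ncardP fB; set d := ncard B => hB.
have [f [fS fI fSurj]] := card_set_bijP hB.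
pose ginv (i : nat) := @xget {classic M} m0 [set m | B m /\ f m = i].
pose psi (y : {m | A m} -> Q) : {ffun 'I_d -> Q} := [ffun i : 'I_d =>
  (match pselect (A (ginv i)) with left p => y (exist _ _ p) | right _ => q0 end : Q)].
exists psi => y y' hyy m pm Bm.
have fm : (f m < d)%N by exact: fS.
have := congr1 (fun F : {ffun 'I_d -> Q} => F (Ordinal fm)) hyy; rewrite !ffunE /=.
have [Bg fg] : B (ginv (f m)) /\ f (ginv (f m)) = f m.
  by apply: (@xgetPex {classic M} m0 [set x | B x /\ f x = f m]); exists m.
have gm : ginv (f m) = m by apply: fI => //; apply: mem_set.
move: (ginv (f m)) gm {Bg fg} => g' gm; subst g'.
case: pselect => [p|np] //.
by rewrite (Prop_irrelevance p pm).
Qed.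

Lemma count_main (M : Type) (Q : finType) (m0 : M) (P F : set M)
  (X : set (M -> Q)) :
  (0 < #|Q|)%N -> F `<=` P -> finite_set P ->
  finite_set (@proj_conf _ _ F X) /\
  (ncard (@proj_conf _ _ P X) <= ncard (@proj_conf _ _ F X) * #|Q| ^ ncard (P `\` F))%N.
Proof.
move=> /card_gt0P[q0 _] FP fP.
have fF : finite_set F := sub_finite_set FP fP.
have [psiF hF] := restr_code q0 m0 (@subset_refl _ F) fF.
have fpF : finite_set (@proj_conf _ _ F X).
  apply: (proj1 (@ncard_inj _ _ (@proj_conf _ _ F X) `I_#|{ffun 'I_(ncard F) -> Q}|
    (fun y => nat_of_ord (enum_rank (psiF y))) _ _ (finite_II _))).
  - move=> y y' _ _ /= /val_inj /enum_rank_inj e.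
    apply: funext => -[m pm]; exact: hF.
  - by move=> y _ /=.
split => //.
have hpF := ncardP fpF; set nF := ncard (@proj_conf _ _ F X) in hpF *.
have [f1 [f1S f1I _]] := card_set_bijP hpF.
have DP : P `\` F `<=` P by move=> m [].
have fD : finite_set (P `\` F) := sub_finite_set DP fP.
have [psiD hD] := restr_code q0 m0 DP fD.
set d := ncard (P `\` F) in psiD hD *.
set K := #|{ffun 'I_d -> Q}|.
have eK : K = (#|Q| ^ d)%N by rewrite /K card_ffun card_ord.
pose rF (y : {m | P m} -> Q) : {m | F m} -> Q :=
  fun z => y (exist _ (proj1_sig z) (FP _ (proj2_sig z))).
pose Phi y := (f1 (rF y) * K + enum_rank (psiD y))%N.
have rFin : forall y, @proj_conf _ _ P X y -> @proj_conf _ _ F X (rF y).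
  by move=> _ [x Xx <-]; exists x.
rewrite -eK -[X in (_ <= X)%N](ncard_II (nF * K)).
apply: (proj2 (@ncard_inj _ _ (@proj_conf _ _ P X) `I_(nF * K) Phi _ _ (finite_II _))).
- move=> y y' /set_mem yP /set_mem y'P /= e.
  have Kpos : (0 < K)%N by apply: leq_ltn_trans (ltn_ord (enum_rank (psiD y))).
  have e1 : f1 (rF y) = f1 (rF y').
    have := congr1 (fun n => n %/ K)%N e; rewrite /Phi /=.
    by rewrite !divnMDl // !divn_small ?ltn_ord // !addn0.
  have e2 : enum_rank (psiD y) = enum_rank (psiD y').
    apply: val_inj; have := congr1 (fun n => n %% K)%N e; rewrite /Phi /=.
    by rewrite !modnMDl !modn_small ?ltn_ord.
  have {}e1 : rF y = rF y'.
    by apply: f1I => //; apply: mem_set; apply: rFin.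
  have {}e2 := enum_rank_inj e2.
  apply: funext => -[m pm].
  have [Fm|nFm] := pselect (F m).
    have := congr1 (fun g => g (exist _ m Fm)) e1; rewrite /rF /=.
    by rewrite (Prop_irrelevance (FP m Fm) pm).
  exact: hD.
- move=> y /rFin yF /=.
  have h1 : (f1 (rF y) < nF)%N by exact: f1S.
  have h2 : (enum_rank (psiD y) < K)%N := ltn_ord _.
  rewrite /Phi.
  have : ((f1 (rF y)).+1 * K <= nF * K)%N by rewrite leq_mul2r h1 orbT.
  by rewrite mulSn; lia.
Qed.

Local Close Scope card_scope.
Unset Implicit Arguments.

Lemma ln_nat_ge0 (R : realType) (n : nat) : 0 <= ln (n%:R : R).
Proof.
case: n => [|n]; first by rewrite ln0.
by apply: ln_ge0; rewrite ler1n.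
Qed.

Theorem lemma11 (R : realType) (S : cell_space) (Q : finType)
  (I : Type) (le : I -> I -> Prop) (F : I -> set (cM S))
  (X : set (cM S -> Q)) (E : set (cG S)) :
  right_amenable S R ->
  finite_set (stab0 S) ->
  (0 < #|Q|)%N ->
  directed le ->
  right_folner_net S R I le F ->
  finite_set [set cact e (cm0 S) | e in E] ->
  (exists2 e, E e & stab0 S e) ->
  (net_entropy R le (fun i => plus_set S (F i) E) X <= net_entropy R le F X)%E.
Proof.
move=> _ fS qpos dir [fF neF fol] fE [e0 Ee0 se0].
have [s hs] := K_fin fS fE.
pose D (n : cM S) i := F i `\` [set m | F i (rsemi S m (cgsel n))].
pose c i := ln (#|Q|%:R : R) *
  \sum_(n <- s) ((ncard (D n i))%:R / (ncard (F i))%:R).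
apply: (@limsup_le _ _ _ _ _ c dir); last first.
  apply: net_to0_scale; apply: net_to0_sum => // n.
  exact: (fol (cgsel n)).
move=> i.
have lq : 0 <= ln (#|Q|%:R : R) := ln_nat_ge0 _ _.
have hc0 : 0 <= c i.
  by apply: mulr_ge0 => //; apply: sumr_ge0 => n _; apply: divr_ge0.
have hb0 : 0 <= ln (ncard (@proj_conf _ _ (F i) X))%:R / (ncard (F i))%:R :> R.
  by apply: divr_ge0 => //; apply: ln_nat_ge0.
set P := plus_set S (F i) E.
have [fP|nfP] := pselect (finite_set P); last first.
  by rewrite (ncard_inf nfP) invr0 mulr0 addr_ge0.
have FP : F i `<=` P by move=> m Fm; exists e0 => //; rewrite rsemi_stab.
have [fpF hcount] := count_main (cm0 S) X qpos FP fP.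
set nP := ncard (@proj_conf _ _ P X) in hcount *.
set nF := ncard (@proj_conf _ _ (F i) X) in hcount hb0 *.
set d := ncard (P `\` F i) in hcount *.
set q := #|Q| in hcount lq qpos *.
have hln : ln (nP%:R : R) <= ln (nF%:R) + d%:R * ln (q%:R).
  have [nP0|nPpos] := posnP nP.
    rewrite nP0 ln0 //; apply: addr_ge0; first exact: ln_nat_ge0.
    exact: mulr_ge0.
  have nFpos : (0 < nF)%N.
    by rewrite lt0n; apply/negP => /eqP h; move: hcount; rewrite h mul0n leqNgt nPpos.
  have qdpos : (0 < q ^ d)%N by rewrite expn_gt0 qpos.
  apply: (@le_trans _ _ (ln ((nF * q ^ d)%N%:R))).
    by rewrite ler_ln ?posrE ?ltr0n ?muln_gt0 ?nFpos // ler_nat.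
  by rewrite natrM lnM ?posrE ?ltr0n // natrX lnXn ?ltr0n // mulr_natl.
have hd : (d <= \sum_(n <- s) ncard (D n i))%N.
  pose B (n : {classic (cM S)}) := (fun t => rsemi S t (cgsel n)) @` D n i.
  have fDn : forall n, finite_set (D n i).
    by move=> n; apply: sub_finite_set (fF i); move=> m [].
  have [fU hU] := ncard_bigU s (B := B) (fun n => finite_image _ (fDn n)).
  apply: leq_trans (ncard_sub _ fU).2 (leq_trans hU _).
    move=> m [Pm nFm]; have [e Ee Ft] := Pm.
    have [s0 [hs0 back]] := rsemi_back m e.
    exists (cact (cmul s0 (cinv e)) (cm0 S)); first exact: hs.
    by exists (rsemi S m e) => //; split => //=; rewrite back.
  apply: leq_sum => n _.
  exact: (ncard_le (card_image_le _ _) (fDn n)).2.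
have ffpos : (0 < ncard (F i))%N := ncard_pos (fF i) (neF i).
have ffle : (ncard (F i) <= ncard P)%N := (ncard_sub FP fP).2.
set ff := ncard (F i) in ffpos ffle hb0 *.
rewrite -/nP.
apply: (@le_trans _ _ ((ln (nF%:R) + d%:R * ln (q%:R)) / (ncard P)%:R)).
  by rewrite ler_wpM2r // invr_ge0.
apply: (@le_trans _ _ ((ln (nF%:R) + d%:R * ln (q%:R)) / ff%:R)).
  apply: ler_wpM2l.
    by apply: addr_ge0; [exact: ln_nat_ge0 | exact: mulr_ge0].
  by rewrite lef_pV2 ?posrE ?ltr0n ?(leq_trans ffpos) // ler_nat.
rewrite mulrDl lerD2l /c -mulr_suml -natr_sum mulrAC mulrC.
by rewrite ler_wpM2l // ler_wpM2r ?invr_ge0 // ler_nat.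
Qed.
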